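(* Under the standing assumptions below, $\lim_{|v|\to+\infty}\frac{q(s,t,v)}{v}=0$ uniformly in $(s,t)\in[0,\pi]\times\mathbb{T}$.
   Context: $\mathbb{T}=\mathbb{R}/(2\pi\mathbb{Z})$. The distinct values $m^2-n^2$ ($m\in\mathbb{N},n\in\mathbb{N}_0$) are ordered $\dots<\lambda_{-1}<\lambda_0=0<\lambda_1<\dots$. Fix a nonzero integer $k$, $\varepsilon_1\in\,]0,\lambda_k-\lambda_{k-1}[$, $\varepsilon_2$ with $0<\varepsilon_2<\frac{1}{\lambda_k-\lambda_{k-1}-\varepsilon_1}-\max\{0,-\frac{1}{\lambda_{k-1}+\varepsilon_1}\}$, $\mu=\max\{0,-\frac{1}{\lambda_{k-1}+\varepsilon_1}\}+\varepsilon_2$, $p_k=\lambda_{k-1}+\varepsilon_1$, $q_k=\lambda_{k-1}+\varepsilon_1+1/\mu$, and $(a,b)\in\,]p_k,q_k[^2$. Let $p:[0,\pi]\times\mathbb{T}\times\mathbb{R}\to\mathbb{R}$ be continuous with $\lim_{|u|\to+\infty}p(s,t,u)/u=0$ uniformly in $(s,t)$, and such that for each $(s,t)$ the map $u\mapsto au^+-bu^-+p(s,t,u)-p_ku$ is strictly increasing and $u\mapsto au^+-bu^-+p(s,t,u)-q_ku$ is strictly decreasing ($u^+=\max\{u,0\}$, $u^-=u^+-u$). Let $H(u)=\frac12(a-p_k)(u^+)^2+\frac12(b-p_k)(u^-)^2$, $P(s,t,u)=\int_0^up(s,t,\tau)d\tau$, $J=H+P$, and $J^*(s,t,v)=\sup_{u\in\mathbb{R}}[vu-J(s,t,u)]$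 (Fenchel–Legendre transform in $u$), which is $C^1$ in $v$; $H^*(v)=\frac{(v^+)^2}{2(a-p_k)}+\frac{(v^-)^2}{2(b-p_k)}$; $Q(s,t,v)=J^*(s,t,v)-H^*(v)$ and $q=\partial Q/\partial v$. *)

(* Defs.v *)
From Stdlib Require Import Reals ZArith.
From Coquelicot Require Import Coquelicot.
Open Scope R_scope.

Definition posp (u : R) : R := Rmax u 0.
Definition negp (u : R) : R := Rmax u 0 - u.

Definition lambda_enum (lam : Z -> R) : Prop :=
  (forall i j : Z, (i < j)%Z -> lam i < lam j) /\
  lam 0%Z = 0 /\
  (forall x : R, (exists i : Z, lam i = x) <->
     exists m n : nat, (1 <= m)%nat /\ x = INR m ^ 2 - INR n ^ 2).

Definition Hf (a b pk u : R) : R :=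
  / 2 * (a - pk) * (posp u) ^ 2 + / 2 * (b - pk) * (negp u) ^ 2.

Definition Pf (p : R -> R -> R -> R) (s t u : R) : R :=
  RInt (fun tau => p s t tau) 0 u.

Definition Jf (a b pk : R) (p : R -> R -> R -> R) (s t u : R) : R :=
  Hf a b pk u + Pf p s t u.

Definition fenchel (f : R -> R) (v : R) : R :=
  real (Lub_Rbar (fun y => exists u : R, y = v * u - f u)).

Definition Jstar (a b pk : R) (p : R -> R -> R -> R) (s t v : R) : R :=
  fenchel (Jf a b pk p s t) v.

Definition Hstar (a b pk v : R) : R :=
  (posp v) ^ 2 / (2 * (a - pk)) + (negp v) ^ 2 / (2 * (b - pk)).

Definition Qf (a b pk : R) (p : R -> R -> R -> R) (s t v : R) : R :=
  Jstar a b pk p s t v - Hstar a b pk v.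

Definition qf (a b pk : R) (p : R -> R -> R -> R) (s t v : R) : R :=
  Derive (fun w => Qf a b pk p s t w) v.

(* Main.v *)
Require Import Defs.
From Stdlib Require Import Reals ZArith Lra Psatz.
From Coquelicot Require Import Coquelicot.
Open Scope R_scope.

Lemma lip_cont (F : R -> R) (C x : R) : 0 < C ->
  (forall y, Rabs (F y - F x) <= C * Rabs (y - x)) -> continuous F x.
Proof.
  intros HC HL. apply filterlim_locally. intros eps.
  assert (He : 0 < eps / C) by (apply Rdiv_lt_0_compat; [apply cond_pos|lra]).
  exists (mkposreal _ He). intros y Hy. change (Rabs (F y - F x) < eps).
  change (Rabs (y - x) < eps / C) in Hy.
  eapply Rle_lt_trans. apply HL.
  apply Rmult_lt_compat_l with (r := C) in Hy; [|lra].
  replace (C * (eps / C)) with (pos eps) in Hy by (field; lra). lra.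
Qed.

Lemma posp_lip x y : Rabs (posp y - posp x) <= Rabs (y - x).
Proof. unfold posp, Rmax. destruct (Rle_dec y 0), (Rle_dec x 0);
  unfold Rabs; repeat destruct Rcase_abs; lra. Qed.

Lemma negp_lip x y : Rabs (negp y - negp x) <= Rabs (y - x).
Proof. unfold negp, Rmax. destruct (Rle_dec y 0), (Rle_dec x 0);
  unfold Rabs; repeat destruct Rcase_abs; lra. Qed.

Lemma posp_negp u : posp u - negp u = u.
Proof. unfold negp, posp. ring. Qed.

Lemma posp_pos u : 0 <= u -> posp u = u.
Proof. intros; unfold posp; apply Rmax_left; lra. Qed.
Lemma negp_pos u : 0 <= u -> negp u = 0.
Proof. intros; unfold negp, posp; rewrite Rmax_left; lra. Qed.
Lemma posp_neg u : u <= 0 -> posp u = 0.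
Proof. intros; unfold posp; apply Rmax_right; lra. Qed.
Lemma negp_neg u : u <= 0 -> negp u = - u.
Proof. intros; unfold negp, posp; rewrite Rmax_right; lra. Qed.

Lemma quad_derive (F : R -> R) (x d C : R) : 0 < C ->
  (forall h, Rabs (F (x + h) - F x - d * h) <= C * h ^ 2) -> is_derive F x d.
Proof.
  intros HC HB. apply is_derive_Reals. intros eps Heps.
  assert (He : 0 < eps / C) by (apply Rdiv_lt_0_compat; lra).
  exists (mkposreal _ He). intros h Hh Hhl. simpl in Hhl.
  replace ((F (x + h) - F x) / h - d) with ((F (x + h) - F x - d * h) / h)
    by (field; auto).
  unfold Rdiv at 1. rewrite Rabs_mult, Rabs_inv.
  apply Rmult_lt_reg_r with (Rabs h). apply Rabs_pos_lt; auto.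
  rewrite Rmult_assoc, Rinv_l by (apply Rabs_no_R0; auto). rewrite Rmult_1_r.
  eapply Rle_lt_trans. apply HB.
  replace (h ^ 2) with (Rabs h * Rabs h) by (rewrite <- Rabs_mult; rewrite Rabs_right; nra).
  assert (0 < Rabs h) by (apply Rabs_pos_lt; auto).
  apply Rmult_lt_compat_l with (r := C) in Hhl; [|lra].
  replace (C * (eps / C)) with eps in Hhl by (field; lra). nra.
Qed.

Lemma posp2_bound x h :
  Rabs (posp (x + h) ^ 2 - posp x ^ 2 - 2 * posp x * h) <= 1 * h ^ 2.
Proof. unfold posp, Rmax. destruct (Rle_dec (x+h) 0), (Rle_dec x 0);
  unfold Rabs; repeat destruct Rcase_abs; nra. Qed.

Lemma negp2_bound x h :
  Rabs (negp (x + h) ^ 2 - negp x ^ 2 + 2 * negp x * h) <= 1 * h ^ 2.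
Proof. unfold negp, Rmax. destruct (Rle_dec (x+h) 0), (Rle_dec x 0);
  unfold Rabs; repeat destruct Rcase_abs; nra. Qed.

Lemma H_derive al be x :
  is_derive (fun u => / 2 * al * posp u ^ 2 + / 2 * be * negp u ^ 2) x
    (al * posp x - be * negp x).
Proof.
  apply quad_derive with (C := Rabs al + Rabs be + 1).
  pose proof (Rabs_pos al); pose proof (Rabs_pos be); lra.
  intros h. pose proof (posp2_bound x h) as H1. pose proof (negp2_bound x h) as H2.
  replace (/ 2 * al * posp (x + h) ^ 2 + / 2 * be * negp (x + h) ^ 2 -
   (/ 2 * al * posp x ^ 2 + / 2 * be * negp x ^ 2) - (al * posp x - be * negp x) * h)
   with (/2 * al * (posp (x + h) ^ 2 - posp x ^ 2 - 2 * posp x * h)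
        + /2 * be * (negp (x + h) ^ 2 - negp x ^ 2 + 2 * negp x * h)) by field.
  eapply Rle_trans. apply Rabs_triang. rewrite !Rabs_mult.
  rewrite (Rabs_right (/2)) by lra.
  pose proof (Rabs_pos al); pose proof (Rabs_pos be).
  pose proof (Rabs_pos (posp (x + h) ^ 2 - posp x ^ 2 - 2 * posp x * h)).
  pose proof (Rabs_pos (negp (x + h) ^ 2 - negp x ^ 2 + 2 * negp x * h)).
  assert (0 <= h^2) by nra.
  nra.
Qed.
Definition J0 (al be : R) (f : R -> R) (u : R) : R :=
  / 2 * al * posp u ^ 2 + / 2 * be * negp u ^ 2 + RInt f 0 u.
Definition G0 (al be : R) (f : R -> R) (u : R) : R :=
  al * posp u - be * negp u + f u.

Lemma J0_derive al be f x : (forall y, continuous f y) ->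
  is_derive (J0 al be f) x (G0 al be f x).
Proof.
  intros Hc. unfold J0, G0.
  apply (is_derive_plus (fun u => / 2 * al * posp u ^ 2 + / 2 * be * negp u ^ 2)
     (fun u => RInt f 0 u)).
  apply H_derive.
  apply (is_derive_RInt f (fun u => RInt f 0 u) 0 x).
  apply filter_forall. intros y. apply (@RInt_correct R_CompleteNormedModule).
  apply ex_RInt_continuous. intros; apply Hc.
  apply Hc.
Qed.

Lemma G0_cont al be f x : (forall y, continuous f y) -> continuous (G0 al be f) x.
Proof.
  intros Hc. unfold G0.
  apply (continuous_plus (fun u => al * posp u - be * negp u) f).
  apply lip_cont with (C := Rabs al + Rabs be + 1).
  pose proof (Rabs_pos al); pose proof (Rabs_pos be); lra.
  intros y.
  replace (al * posp y - be * negp y - (al * posp x - be * negp x)) with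
     (al * (posp y - posp x) - be * (negp y - negp x)) by ring.
  eapply Rle_trans. apply Rabs_triang. rewrite Rabs_Ropp, !Rabs_mult.
  pose proof (posp_lip x y); pose proof (negp_lip x y).
  pose proof (Rabs_pos al); pose proof (Rabs_pos be).
  pose proof (Rabs_pos (posp y - posp x)); pose proof (Rabs_pos (negp y - negp x)).
  pose proof (Rabs_pos (y - x)). nra.
  apply Hc.
Qed.

Lemma J0_convex al be f u w : (forall y, continuous f y) ->
  (forall u1 u2, u1 < u2 -> G0 al be f u1 < G0 al be f u2) ->
  J0 al be f w + G0 al be f w * (u - w) <= J0 al be f u.
Proof.
  intros Hc Hm.
  destruct (MVT_gen (J0 al be f) w u (G0 al be f)) as [c [Hc1 Hc2]].
  intros; apply J0_derive; auto.
  intros; apply continuity_pt_filterlim. apply (ex_derive_continuous (J0 al be f)).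
  eexists. apply J0_derive; auto.
  assert (Hle : forall x y, x <= y -> G0 al be f x <= G0 al be f y).
  { intros x y Hxy. destruct (Req_dec x y). subst; lra. left; apply Hm; lra. }
  destruct (Rle_dec w u).
  - rewrite Rmin_left, Rmax_right in Hc1 by lra.
    assert (G0 al be f w <= G0 al be f c) by (apply Hle; lra). nra.
  - rewrite Rmin_right, Rmax_left in Hc1 by lra.
    assert (G0 al be f c <= G0 al be f w) by (apply Hle; lra). nra.
Qed.

Lemma G0_exists al be f d M w : 0 < al -> 0 < be -> 0 < M -> 0 <= d ->
  d <= al / 2 -> d <= be / 2 -> (forall y, continuous f y) ->
  (forall u, M <= Rabs u -> Rabs (f u) <= d * Rabs u) ->
  exists u, G0 al be f u = w.
Proof.
  intros Hal Hbe HM Hd Hda Hdb Hc Hg.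
  set (R0 := M + Rabs w * (2 / al + 2 / be) + 1).
  assert (Haw : 0 <= Rabs w) by apply Rabs_pos.
  assert (H2a : 0 < 2 / al) by (apply Rdiv_lt_0_compat; lra).
  assert (H2b : 0 < 2 / be) by (apply Rdiv_lt_0_compat; lra).
  assert (HR0 : M + 1 <= R0) by (unfold R0; nra).
  assert (HRa : al * R0 / 2 >= Rabs w).
  { unfold R0. replace (al * (M + Rabs w * (2 / al + 2 / be) + 1) / 2) with
      (al * (M + 1) / 2 + Rabs w + Rabs w * al / be) by (field; lra).
    assert (0 <= Rabs w * al / be) by (apply Rmult_le_pos; [nra| left; apply Rinv_0_lt_compat; lra]). nra. }
  assert (HRb : be * R0 / 2 >= Rabs w).
  { unfold R0. replace (be * (M + Rabs w * (2 / al + 2 / be) + 1) / 2) with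
      (be * (M + 1) / 2 + Rabs w + Rabs w * be / al) by (field; lra).
    assert (0 <= Rabs w * be / al) by (apply Rmult_le_pos; [nra| left; apply Rinv_0_lt_compat; lra]). nra. }
  assert (Hup : w <= G0 al be f R0).
  { unfold G0. rewrite posp_pos, negp_pos by lra.
    assert (Hf := Hg R0). rewrite Rabs_right in Hf by lra.
    specialize (Hf ltac:(lra)). apply Rabs_le_between in Hf.
    pose proof (Rle_abs w). nra. }
  assert (Hlo : G0 al be f (- R0) <= w).
  { unfold G0. rewrite posp_neg, negp_neg by lra.
    assert (Hf := Hg (- R0)). rewrite Rabs_Ropp, Rabs_right in Hf by lra.
    specialize (Hf ltac:(lra)). apply Rabs_le_between in Hf.
    pose proof (Rle_abs (- w)). rewrite Rabs_Ropp in *. nra. }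
  destruct (IVT_gen_consistent (G0 al be f) (- R0) R0 w) as [u [_ Hu]].
  intros; apply G0_cont; auto.
  rewrite Rmin_left, Rmax_right by lra. lra.
  exists u; exact Hu.
Qed.

Lemma fenchel_J0 al be f u w : (forall y, continuous f y) ->
  (forall u1 u2, u1 < u2 -> G0 al be f u1 < G0 al be f u2) ->
  G0 al be f u = w ->
  fenchel (J0 al be f) w = w * u - J0 al be f u.
Proof.
  intros Hc Hm Hu. unfold fenchel.
  rewrite (is_lub_Rbar_unique _ (Finite (w * u - J0 al be f u))). reflexivity.
  split.
  - intros y [u' ->]. simpl.
    pose proof (J0_convex al be f u' u Hc Hm). rewrite Hu in H. nra.
  - intros b Hb. apply Hb. exists u. reflexivity.
Qed.

Lemma quot_bounds al be f w h u1 u2 : (forall y, continuous f y) ->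
  (forall u1 u2, u1 < u2 -> G0 al be f u1 < G0 al be f u2) ->
  0 < h -> G0 al be f u1 = w -> G0 al be f u2 = w + h ->
  u1 <= (fenchel (J0 al be f) (w + h) - fenchel (J0 al be f) w) / h <= u2.
Proof.
  intros Hc Hm Hh H1 H2.
  rewrite (fenchel_J0 al be f u1 w), (fenchel_J0 al be f u2 (w + h)); auto.
  pose proof (J0_convex al be f u1 u2 Hc Hm) as C1.
  pose proof (J0_convex al be f u2 u1 Hc Hm) as C2.
  rewrite H2 in C1. rewrite H1 in C2.
  split.
  - apply Rmult_le_reg_r with h; auto. unfold Rdiv. rewrite Rmult_assoc, Rinv_l by lra. nra.
  - apply Rmult_le_reg_r with h; auto. unfold Rdiv. rewrite Rmult_assoc, Rinv_l by lra. nra.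
Qed.

Lemma G0_mono_le al be f x y :
  (forall u1 u2, u1 < u2 -> G0 al be f u1 < G0 al be f u2) ->
  G0 al be f x <= G0 al be f y -> x <= y.
Proof. intros Hm H. destruct (Rle_dec x y); auto. specialize (Hm y x ltac:(lra)). lra. Qed.

Lemma asym_pos al be f d M w u : 0 < al -> 0 < M -> 0 <= d -> d <= al / 2 ->
  (forall u1 u2, u1 < u2 -> G0 al be f u1 < G0 al be f u2) ->
  (forall u, M <= Rabs u -> Rabs (f u) <= d * Rabs u) ->
  (al + d) * M <= w -> G0 al be f u = w ->
  Rabs (u - w / al) <= 2 * d * w / al ^ 2.
Proof.
  intros Hal HM Hd Hda Hm Hg Hw Hu.
  assert (HuM : M <= u).
  { destruct (Rle_dec M u); auto. exfalso.
    specialize (Hm u M ltac:(lra)). unfold G0 in Hm, Hu.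
    rewrite (posp_pos M), (negp_pos M) in Hm by lra.
    specialize (Hg M). rewrite Rabs_right in Hg by lra. specialize (Hg ltac:(lra)).
    apply Rabs_le_between in Hg. nra. }
  unfold G0 in Hu. rewrite posp_pos, negp_pos in Hu by lra.
  specialize (Hg u). rewrite Rabs_right in Hg by lra. specialize (Hg ltac:(lra)).
  apply Rabs_le_between in Hg.
  assert (Hu2 : al * u <= 2 * w) by nra.
  apply Rabs_le_between.
  replace (u - w / al) with ((al * u - w) / al) by (field; lra).
  replace (2 * d * w / al ^ 2) with ((2 * d * w / al) / al) by (field; lra).
  assert (Hk : Rabs (al * u - w) <= 2 * d * w / al).
  { assert (Hq : u <= 2 * w / al).
    { apply Rmult_le_reg_l with al; [lra|].
      replace (al * (2 * w / al)) with (2 * w) by (field; lra). lra. }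
    assert (d * u <= d * (2 * w / al)) by (apply Rmult_le_compat_l; lra).
    replace (2 * d * w / al) with (d * (2 * w / al)) by (field; lra).
    apply Rabs_le_between. lra. }
  apply Rabs_le_between in Hk. unfold Rdiv in *.
  assert (0 < / al) by (apply Rinv_0_lt_compat; lra).
  split; [rewrite Ropp_mult_distr_l|]; apply Rmult_le_compat_r; lra.
Qed.

Lemma asym_neg al be f d M w u : 0 < be -> 0 < M -> 0 <= d -> d <= be / 2 ->
  (forall u1 u2, u1 < u2 -> G0 al be f u1 < G0 al be f u2) ->
  (forall u, M <= Rabs u -> Rabs (f u) <= d * Rabs u) ->
  w <= - ((be + d) * M) -> G0 al be f u = w ->
  Rabs (u - w / be) <= 2 * d * (- w) / be ^ 2.
Proof.
  intros Hbe HM Hd Hdb Hm Hg Hw Hu.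
  assert (HuM : u <= - M).
  { destruct (Rle_dec u (- M)); auto. exfalso.
    specialize (Hm (- M) u ltac:(lra)). unfold G0 in Hm, Hu.
    rewrite (posp_neg (- M)), (negp_neg (- M)) in Hm by lra.
    specialize (Hg (- M)). rewrite Rabs_Ropp, Rabs_right in Hg by lra. specialize (Hg ltac:(lra)).
    apply Rabs_le_between in Hg. nra. }
  unfold G0 in Hu. rewrite posp_neg, negp_neg in Hu by lra.
  specialize (Hg u). rewrite Rabs_left in Hg by lra. specialize (Hg ltac:(lra)).
  apply Rabs_le_between in Hg.
  assert (Hu2 : be * u >= 2 * w) by nra.
  apply Rabs_le_between.
  replace (u - w / be) with ((be * u - w) / be) by (field; lra).
  replace (2 * d * (- w) / be ^ 2) with ((2 * d * (- w) / be) / be) by (field; lra).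
  assert (Hk : Rabs (be * u - w) <= 2 * d * (- w) / be).
  { assert (Hq : - u <= 2 * (- w) / be).
    { apply Rmult_le_reg_l with be; [lra|].
      replace (be * (2 * (- w) / be)) with (2 * (- w)) by (field; lra). lra. }
    assert (d * (- u) <= d * (2 * (- w) / be)) by (apply Rmult_le_compat_l; lra).
    replace (2 * d * (- w) / be) with (d * (2 * (- w) / be)) by (field; lra).
    apply Rabs_le_between. lra. }
  apply Rabs_le_between in Hk. unfold Rdiv in *.
  assert (0 < / be) by (apply Rinv_0_lt_compat; lra).
  split; [rewrite Ropp_mult_distr_l|]; apply Rmult_le_compat_r; lra.
Qed.

Lemma derive_bound (F : R -> R) x L U :
  (forall h, 0 < h <= 1 -> L <= (F (x + h) - F x) / h <= U) ->
  L <= Derive F x <= U.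
Proof.
  intros HB. unfold Derive, Lim.
  set (s := fun n : nat => (F (x + Rbar_loc_seq 0 n) - F x) / Rbar_loc_seq 0 n).
  assert (Hs : forall n, L <= s n <= U).
  { intros n. unfold s; simpl. apply HB.
    pose proof (pos_INR n).
    split. rewrite Rplus_0_l. apply Rinv_0_lt_compat; lra.
    rewrite Rplus_0_l. rewrite <- Rinv_1. apply Rinv_le_contravar; lra. }
  assert (H1 : Rbar_le (Lim_seq s) (Lim_seq (fun _ => U))).
  { apply Lim_seq_le_loc. exists 0%nat. intros; apply Hs. }
  assert (H2 : Rbar_le (Lim_seq (fun _ => L)) (Lim_seq s)).
  { apply Lim_seq_le_loc. exists 0%nat. intros; apply Hs. }
  rewrite Lim_seq_const in H1, H2.
  fold s. destruct (Lim_seq s); simpl in *; try contradiction. lra.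
Qed.

Lemma cont_slice (p : R -> R -> R -> R) s t : 0 <= s <= PI ->
  (forall s t u, 0 <= s <= PI ->
     filterlim (fun x : R * R * R => p (fst (fst x)) (snd (fst x)) (snd x))
       (within (fun x : R * R * R => 0 <= fst (fst x) <= PI) (locally (s, t, u)))
       (locally (p s t u))) ->
  forall u, continuous (fun tau => p s t tau) u.
Proof.
  intros Hs Hc u. specialize (Hc s t u Hs).
  unfold continuous.
  apply (filterlim_comp R (R * R * R) R (fun y => (s, t, y))
    (fun x : R * R * R => p (fst (fst x)) (snd (fst x)) (snd x)) (locally u)
    (within (fun x : R * R * R => 0 <= fst (fst x) <= PI) (locally (s, t, u)))
    (locally (p s t u))); [|exact Hc].
  intros P HP. unfold within in HP. destruct HP as [eps Heps].
  exists eps. intros y Hy. apply Heps; [|simpl; lra].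
  split; [split; apply ball_center|exact Hy].
Qed.

Lemma div_le_help x y c : 0 < c -> x <= y * c -> x / c <= y.
Proof. intros Hc H. apply Rmult_le_reg_r with c; auto. unfold Rdiv.
  rewrite Rmult_assoc, Rinv_l by lra. lra. Qed.

Lemma Hstar_quot_pos a b pk w h : 0 < a - pk -> 0 <= w -> 0 < h ->
  (Hstar a b pk (w + h) - Hstar a b pk w) / h = (2 * w + h) / (2 * (a - pk)).
Proof. intros. unfold Hstar.
  rewrite (posp_pos w), (posp_pos (w+h)), (negp_pos w), (negp_pos (w+h)) by lra.
  replace (0 ^ 2 / (2 * (b - pk))) with 0 by (unfold Rdiv; ring). field; lra. Qed.

Lemma Hstar_quot_neg a b pk w h : 0 < b - pk -> w + h <= 0 -> 0 < h ->
  (Hstar a b pk (w + h) - Hstar a b pk w) / h = (2 * w + h) / (2 * (b - pk)).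
Proof. intros. unfold Hstar.
  rewrite (posp_neg w), (posp_neg (w+h)), (negp_neg w), (negp_neg (w+h)) by lra.
  replace (0 ^ 2 / (2 * (a - pk))) with 0 by (unfold Rdiv; ring). field; lra. Qed.

Lemma G0_eq a b pk f u : G0 (a - pk) (b - pk) f u = a * posp u - b * negp u + f u - pk * u.
Proof. unfold G0, negp, posp. ring. Qed.

Lemma quot_split (F1 F2 : R -> R) w h : h <> 0 ->
  ((fun x => F1 x - F2 x) (w + h) - (fun x => F1 x - F2 x) w) / h =
  (F1 (w + h) - F1 w) / h - (F2 (w + h) - F2 w) / h.
Proof. intros. simpl. field; auto. Qed.

Theorem lemma3 (lam : Z -> R) (k : Z) (eps1 eps2 a b : R)
  (p : R -> R -> R -> R) :
  lambda_enum lam ->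
  k <> 0%Z ->
  0 < eps1 < lam k - lam (k - 1)%Z ->
  let pk := lam (k - 1)%Z + eps1 in
  0 < eps2 < / (lam k - lam (k - 1)%Z - eps1) - Rmax 0 (- / pk) ->
  let mu := Rmax 0 (- / pk) + eps2 in
  let qk := pk + / mu in
  pk < a < qk -> pk < b < qk ->
  (* p continuous on [0,pi] x T x R (T = R/2piZ: p is 2pi-periodic in t) *)
  (forall s t u, 0 <= s <= PI ->
     filterlim (fun x : R * R * R => p (fst (fst x)) (snd (fst x)) (snd x))
       (within (fun x : R * R * R => 0 <= fst (fst x) <= PI) (locally (s, t, u)))
       (locally (p s t u))) ->
  (forall s t u, p s (t + 2 * PI) u = p s t u) ->
  (* lim_{|u|->oo} p(s,t,u)/u = 0 uniformly in (s,t) *)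
  (forall e, 0 < e -> exists M, 0 < M /\ forall s t u, 0 <= s <= PI ->
     M <= Rabs u -> Rabs (p s t u / u) <= e) ->
  (forall s t u1 u2, 0 <= s <= PI -> u1 < u2 ->
     a * posp u1 - b * negp u1 + p s t u1 - pk * u1
     < a * posp u2 - b * negp u2 + p s t u2 - pk * u2) ->
  (forall s t u1 u2, 0 <= s <= PI -> u1 < u2 ->
     a * posp u1 - b * negp u1 + p s t u1 - qk * u1
     > a * posp u2 - b * negp u2 + p s t u2 - qk * u2) ->
  (* conclusion: lim_{|v|->oo} q(s,t,v)/v = 0 uniformly in (s,t) *)
  forall e, 0 < e -> exists M, 0 < M /\ forall s t v, 0 <= s <= PI ->
     M <= Rabs v -> Rabs (qf a b pk p s t v / v) <= e.
Proof.
  intros Hlam Hk Heps1 pk Heps2 mu qk Ha Hb Hcont Hper Hgrow Hm1 Hm2 e He.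
  assert (Hal : 0 < a - pk) by lra.
  assert (Hbe : 0 < b - pk) by lra.
  set (d := Rmin (Rmin ((a - pk) / 2) ((b - pk) / 2))
                 (Rmin (e * (a - pk) ^ 2 / 8) (e * (b - pk) ^ 2 / 8))).
  assert (Hd : 0 < d).
  { unfold d. assert (0 < (a - pk) ^ 2) by nra. assert (0 < (b - pk) ^ 2) by nra.
    repeat apply Rmin_pos; unfold Rdiv; try nra. }
  assert (Hd1 : d <= (a - pk) / 2) by (unfold d; eapply Rle_trans; [apply Rmin_l|apply Rmin_l]).
  assert (Hd2 : d <= (b - pk) / 2) by (unfold d; eapply Rle_trans; [apply Rmin_l|apply Rmin_r]).
  assert (Hd3 : d <= e * (a - pk) ^ 2 / 8) by (unfold d; eapply Rle_trans; [apply Rmin_r|apply Rmin_l]).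
  assert (Hd4 : d <= e * (b - pk) ^ 2 / 8) by (unfold d; eapply Rle_trans; [apply Rmin_r|apply Rmin_r]).
  clearbody d.
  destruct (Hgrow d Hd) as [M [HM HgM]].
  assert (Hg : forall s t, 0 <= s <= PI -> forall u, M <= Rabs u ->
                 Rabs (p s t u) <= d * Rabs u).
  { intros s t Hs u Hu. specialize (HgM s t u Hs Hu).
    assert (Hu0 : 0 < Rabs u) by lra.
    assert (u <> 0) by (intro; subst; rewrite Rabs_R0 in Hu0; lra).
    replace (p s t u) with ((p s t u / u) * u) by (field; auto).
    rewrite Rabs_mult. apply Rmult_le_compat_r; [apply Rabs_pos|auto]. }
  set (al := a - pk) in *. set (be := b - pk) in *.
  assert (Hae : 0 < 2 / (al * e)) by (apply Rdiv_lt_0_compat; nra).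
  assert (Hbee : 0 < 2 / (be * e)) by (apply Rdiv_lt_0_compat; nra).
  assert (HiA : forall v, 2 / (al * e) <= v -> / al <= e * v / 2).
  { intros v Hv. replace (/ al) with (e / 2 * (2 / (al * e))) by (field; lra).
    replace (e * v / 2) with (e / 2 * v) by field. apply Rmult_le_compat_l; lra. }
  assert (HiB : forall v, 2 / (be * e) <= v -> / be <= e * v / 2).
  { intros v Hv. replace (/ be) with (e / 2 * (2 / (be * e))) by (field; lra).
    replace (e * v / 2) with (e / 2 * v) by field. apply Rmult_le_compat_l; lra. }
  assert (HdA : forall v, 0 <= v -> 2 * d * v / al ^ 2 <= e * v / 4).
  { intros v Hv. apply div_le_help. nra. nra. }
  assert (HdB : forall v, 0 <= v -> 2 * d * v / be ^ 2 <= e * v / 4).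
  { intros v Hv. apply div_le_help. nra. nra. }
  set (V := (al + d) * M + (be + d) * M + 2 + 2 / (al * e) + 2 / (be * e)).
  assert (HV1 : (al + d) * M + 1 <= V) by (unfold V; nra).
  assert (HV2 : (be + d) * M + 1 <= V) by (unfold V; nra).
  assert (HV3 : 2 / (al * e) + 1 <= V) by (unfold V; nra).
  assert (HV4 : 2 / (be * e) + 1 <= V) by (unfold V; nra).
  exists V. split. lra.
  intros s t v Hs Hv.
  pose (f := p s t).
  assert (Hc : forall y, continuous f y) by (apply cont_slice; auto).
  assert (Hm : forall u1 u2, u1 < u2 -> G0 al be f u1 < G0 al be f u2).
  { intros. unfold al, be. rewrite !G0_eq. apply Hm1; auto. }
  assert (Hgf : forall u, M <= Rabs u -> Rabs (f u) <= d * Rabs u) by (apply Hg; auto).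
  assert (Hex : forall w, exists u, G0 al be f u = w).
  { intros w. apply (G0_exists al be f d M w); auto; lra. }
  assert (HQ : Rabs (qf a b pk p s t v) <= e * Rabs v).
  { unfold qf.
    change (fun w => Qf a b pk p s t w) with
      (fun w => fenchel (J0 al be f) w - Hstar a b pk w).
    destruct (Rle_dec 0 v) as [Hv0|Hv0].
    - rewrite (Rabs_right v) in Hv |- * by lra.
      destruct (Hex v) as [u1 Hu1]. destruct (Hex (v + 1)) as [u3 Hu3].
      assert (HB : u1 - v / al - / (2 * al) <=
                   Derive (fun w => fenchel (J0 al be f) w - Hstar a b pk w) v
                   <= u3 - v / al).
      { apply derive_bound. intros h Hh. destruct (Hex (v + h)) as [u2 Hu2].
        rewrite (quot_split (fenchel (J0 al be f)) (Hstar a b pk)) by lra.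
        pose proof (quot_bounds al be f v h u1 u2 Hc Hm ltac:(lra) Hu1 Hu2) as Hq.
        rewrite Hstar_quot_pos by (unfold al in Hal; lra). fold al.
        assert (u2 <= u3) by (apply (G0_mono_le al be f); auto; rewrite Hu2, Hu3; lra).
        replace ((2 * v + h) / (2 * al)) with (v / al + h * / (2 * al)) by (field; lra).
        assert (0 < / (2 * al)) by (apply Rinv_0_lt_compat; lra).
        assert (h * / (2 * al) <= / (2 * al)) by nra.
        assert (0 <= h * / (2 * al)) by nra.
        lra. }
      pose proof (asym_pos al be f d M v u1 Hal HM ltac:(lra) Hd1 Hm Hgf ltac:(lra) Hu1) as A1.
      pose proof (asym_pos al be f d M (v + 1) u3 Hal HM ltac:(lra) Hd1 Hm Hgf ltac:(lra) Hu3) as A3.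
      apply Rabs_le_between in A1. apply Rabs_le_between in A3.
      pose proof (HdA v ltac:(lra)). pose proof (HdA (v + 1) ltac:(lra)).
      pose proof (HiA v ltac:(lra)).
      assert (/ (2 * al) = / al / 2) by (field; lra).
      replace ((v + 1) / al) with (v / al + / al) in A3 by (field; lra).
      assert (e <= e * v) by nra.
      assert (e * (v + 1) / 4 = e * v / 4 + e / 4) by field.
      apply Rabs_le_between. lra.
    - rewrite (Rabs_left v) in Hv |- * by lra.
      destruct (Hex v) as [u1 Hu1]. destruct (Hex (v + 1)) as [u3 Hu3].
      assert (HB : u1 - v / be - / (2 * be) <=
                   Derive (fun w => fenchel (J0 al be f) w - Hstar a b pk w) v
                   <= u3 - v / be).
      { apply derive_bound. intros h Hh. destruct (Hex (v + h)) as [u2 Hu2].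
        rewrite (quot_split (fenchel (J0 al be f)) (Hstar a b pk)) by lra.
        pose proof (quot_bounds al be f v h u1 u2 Hc Hm ltac:(lra) Hu1 Hu2) as Hq.
        rewrite Hstar_quot_neg by (unfold be in Hbe; lra). fold be.
        assert (u2 <= u3) by (apply (G0_mono_le al be f); auto; rewrite Hu2, Hu3; lra).
        replace ((2 * v + h) / (2 * be)) with (v / be + h * / (2 * be)) by (field; lra).
        assert (0 < / (2 * be)) by (apply Rinv_0_lt_compat; lra).
        assert (h * / (2 * be) <= / (2 * be)) by nra.
        assert (0 <= h * / (2 * be)) by nra.
        lra. }
      pose proof (asym_neg al be f d M v u1 Hbe HM ltac:(lra) Hd2 Hm Hgf ltac:(lra) Hu1) as A1.
      pose proof (asym_neg al be f d M (v + 1) u3 Hbe HM ltac:(lra) Hd2 Hm Hgf ltac:(lra) Hu3) as A3.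
      apply Rabs_le_between in A1. apply Rabs_le_between in A3.
      pose proof (HdB (- v) ltac:(lra)). pose proof (HdB (- (v + 1)) ltac:(lra)).
      pose proof (HiB (- v) ltac:(lra)).
      assert (/ (2 * be) = / be / 2) by (field; lra).
      replace ((v + 1) / be) with (v / be + / be) in A3 by (field; lra).
      assert (e * - (v + 1) / 4 <= e * - v / 4) by nra.
      apply Rabs_le_between. nra. }
  assert (Hv0 : 0 < Rabs v) by lra.
  unfold Rdiv. rewrite Rabs_mult, Rabs_inv.
  apply div_le_help; auto.
Qed.
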